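(* Let $K$ be a positive integer, $\tau\in\mathbb H$, and for $u,v\in\mathbb C$ write $z=e^{2\pi i u}$, $y=e^{2\pi i v}$, $q=e^{2\pi i\tau}$. Define the level $K$ Appell-Lerch sum $$A_K(u,v;\tau)=e^{\pi i K u}\sum_{n\in\mathbb Z}\frac{(-1)^{Kn}q^{Kn(n+1)/2}y^n}{1-zq^n},$$ and let $A_1$ denote the case $K=1$, i.e. $A_1(u,v;\tau)=e^{\pi i u}\sum_{n\in\mathbb Z}\frac{(-1)^{n}q^{n(n+1)/2}y^n}{1-zq^n}$. Then, whenever all terms are defined (i.e. no denominator vanishes), $$A_K(u,v;\tau)=\sum_{m=0}^{K-1}e^{2\pi i m u}\,A_1\Big(Ku,\;v+m\tau+\tfrac{K-1}{2};\;K\tau\Big)$$ and $$A_K(u,v;\tau)=K^{-1}e^{\pi i (K-1)u}\sum_{m=0}^{K-1}A_1\Big(u,\;\tfrac{v}{K}+\tfrac{m}{K}+\tau\tfrac{K-1}{2K};\;\tfrac{\tau}{K}\Big).$$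
   Context: The series defining $A_K$ converges for $\tau\in\mathbb H$ and all $v\in\mathbb C$, provided $u\notin\mathbb Z+\mathbb Z\tau$. *)

(* Defs.v *)
From Stdlib Require Import Reals ZArith.
From Coquelicot Require Import Coquelicot.
Open Scope C_scope.

Definition cexp (w : C) : C :=
  (exp (Re w) * cos (Im w), exp (Re w) * sin (Im w))%R.

Definition Ci : C := (0%R, 1%R).
Definition two_pi_i : C := RtoC (2 * PI)%R * Ci.

Definition signZ (m : Z) : C := if Z.even m then RtoC 1 else RtoC (-1).

(* Sum over n in Z of f n, as the sum of the two one-sided series
   (real and imaginary parts separately); equals the usual sum whenever the
   bilateral series converges absolutely, which is the case here. *)
Definition zsum (f : Z -> C) : C :=
  ((Series (fun n => Re (f (Z.of_nat n))) +
    Series (fun n => Re (f (- Z.of_nat n - 1)%Z)))%R,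
   (Series (fun n => Im (f (Z.of_nat n))) +
    Series (fun n => Im (f (- Z.of_nat n - 1)%Z)))%R).

Definition AL_term (K : nat) (u v tau : C) (n : Z) : C :=
  signZ (Z.of_nat K * n)%Z
  * cexp (two_pi_i * tau * RtoC (IZR (Z.of_nat K * n * (n + 1)) / 2)%R)
  * cexp (two_pi_i * v * RtoC (IZR n))
  / (RtoC 1 - cexp (two_pi_i * u) * cexp (two_pi_i * tau * RtoC (IZR n))).

Definition AL (K : nat) (u v tau : C) : C :=
  cexp (RtoC PI * Ci * RtoC (INR K) * u) * zsum (AL_term K u v tau).

Definition AL_defined (u tau : C) : Prop :=
  forall n : Z,
    RtoC 1 - cexp (two_pi_i * u) * cexp (two_pi_i * tau * RtoC (IZR n)) <> RtoC 0.

Definition csum_upto (K : nat) (f : nat -> C) : C :=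
  List.fold_right Cplus (RtoC 0) (List.map f (List.seq 0 K)).

(* Main.v *)
Require Import Defs.
From Stdlib Require Import Reals ZArith Lia Lra.
From Coquelicot Require Import Coquelicot.
Open Scope C_scope.

Lemma C_eq (a b : C) : Re a = Re b -> Im a = Im b -> a = b.
Proof. destruct a, b; simpl; intros; subst; auto. Qed.

Lemma cexp_add a b : cexp (a + b) = cexp a * cexp b.
Proof.
  destruct a as [a1 a2], b as [b1 b2]; unfold cexp; apply C_eq; simpl;
  rewrite exp_plus; [rewrite cos_plus | rewrite sin_plus]; ring.
Qed.

Lemma cexp_0 : cexp 0 = 1.
Proof. unfold cexp; apply C_eq; simpl; rewrite ?exp_0, ?cos_0, ?sin_0; ring. Qed.

Lemma Cmod_cexp w : Cmod (cexp w) = exp (Re w).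
Proof.
  unfold cexp, Cmod; simpl.
  replace (exp (Re w) * cos (Im w) * (exp (Re w) * cos (Im w) * 1) +
     exp (Re w) * sin (Im w) * (exp (Re w) * sin (Im w) * 1))%R
    with (exp (Re w) * exp (Re w))%R.
  - rewrite sqrt_square; auto. left; apply exp_pos.
  - pose proof (sin2_cos2 (Im w)). unfold Rsqr in H.
    transitivity (exp (Re w) * exp (Re w) * (sin (Im w) * sin (Im w) + cos (Im w) * cos (Im w)))%R.
    rewrite H; ring. ring.
Qed.

Lemma cexp_neq0 w : cexp w <> 0.
Proof. intro H. apply (f_equal Cmod) in H. rewrite Cmod_cexp, Cmod_0 in H.
  pose proof (exp_pos (Re w)); lra. Qed.

Lemma Re_tpi w x : Re (two_pi_i * w * RtoC x) = (- (2 * PI) * Im w * x)%R.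
Proof. destruct w; unfold two_pi_i, Ci; simpl; ring. Qed.

Lemma cexp_int k : cexp (two_pi_i * RtoC (IZR k)) = 1.
Proof.
  unfold cexp, two_pi_i, Ci; apply C_eq; simpl;
  replace (2 * PI * 0 * IZR k + (2 * PI * 1 - 0 * 0) * 0)%R with 0%R by ring;
  replace ((2 * PI * 0 - 0 * 1) * IZR k - (2 * PI * 1 + 0 * 0) * 0)%R with 0%R by ring;
  replace (((2 * PI * 0 - 0 * 1) * 0 + (2 * PI * 1 + 0 * 0) * IZR k))%R with (2 * (IZR k * PI))%R by ring;
  rewrite exp_0; [rewrite cos_2a_sin | rewrite sin_2a];
  rewrite sin_eq_0_1 by (exists k; auto); ring.
Qed.

Lemma cexp_pi : cexp (RtoC PI * Ci) = RtoC (-1).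
Proof. unfold cexp, Ci; apply C_eq; simpl;
  replace (PI * 0 - 0 * 1)%R with 0%R by ring;
  replace (PI * 1 + 0 * 0)%R with PI by ring; rewrite ?exp_0, ?cos_PI, ?sin_PI; ring. Qed.

Lemma signZ_pi k : cexp (RtoC PI * Ci * RtoC (IZR k)) = signZ k.
Proof.
  unfold signZ. destruct (Z.even k) eqn:E.
  - apply Z.even_spec in E. destruct E as [j ->].
    replace (RtoC PI * Ci * RtoC (IZR (2 * j))) with (two_pi_i * RtoC (IZR j)).
    + apply cexp_int.
    + rewrite mult_IZR. unfold two_pi_i, Ci. apply C_eq; simpl; ring.
  - assert (Z.odd k = true) by (rewrite <- Z.negb_even, E; auto).
    apply Z.odd_spec in H. destruct H as [j ->].
    replace (RtoC PI * Ci * RtoC (IZR (2 * j + 1))) with (two_pi_i * RtoC (IZR j) + RtoC PI * Ci).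
    + rewrite cexp_add, cexp_int, cexp_pi. ring.
    + rewrite plus_IZR, mult_IZR. unfold two_pi_i, Ci. apply C_eq; simpl; ring.
Qed.

Lemma signZ_add a b : signZ (a + b) = signZ a * signZ b.
Proof.
  rewrite <- !signZ_pi, <- cexp_add. f_equal. rewrite plus_IZR, RtoC_plus. ring.
Qed.

Fixpoint cpow (w : C) (m : nat) : C := match m with O => 1 | S m => w * cpow w m end.

Lemma cexp_nat w m : cexp (RtoC (INR m) * w) = cpow (cexp w) m.
Proof.
  induction m.
  - simpl. replace (RtoC 0 * w) with (RtoC 0) by ring. apply cexp_0.
  - rewrite S_INR. simpl cpow. rewrite <- IHm, <- cexp_add. f_equal. rewrite RtoC_plus. ring.
Qed.



Lemma fold_plus_shift (l : list C) a b :
  List.fold_right Cplus (a + b) l = List.fold_right Cplus a l + b.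
Proof. induction l; simpl; auto. rewrite IHl; ring. Qed.

Lemma csum_S K f : csum_upto (S K) f = csum_upto K f + f K.
Proof.
  unfold csum_upto. rewrite List.seq_S, List.map_app, List.fold_right_app. simpl.
  replace (f K + 0) with (0 + f K) by ring. apply fold_plus_shift.
Qed.

Lemma csum_0 f : csum_upto 0 f = 0.
Proof. reflexivity. Qed.

Lemma csum_ext K f g : (forall m, (m < K)%nat -> f m = g m) -> csum_upto K f = csum_upto K g.
Proof. induction K; intros; auto. rewrite !csum_S, IHK, H; auto. Qed.

Lemma csum_scal K c f : c * csum_upto K f = csum_upto K (fun m => c * f m).
Proof. induction K. rewrite !csum_0; ring. rewrite !csum_S, <- IHK; ring. Qed.

Lemma csum_const K c : csum_upto K (fun _ => c) = RtoC (INR K) * c.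
Proof. induction K. rewrite csum_0; simpl; ring. rewrite csum_S, IHK, S_INR, RtoC_plus; ring. Qed.

Lemma geom K w : (1 - w) * csum_upto K (cpow w) = 1 - cpow w K.
Proof. induction K. rewrite csum_0; simpl; ring.
  rewrite csum_S. simpl. rewrite Cmult_plus_distr_l, IHK. ring. Qed.
Open Scope C_scope.

Lemma im_le_Cmod c : (Rabs (Im c) <= Cmod c)%R.
Proof.
  destruct c as [a b]. unfold Cmod; simpl.
  rewrite <- sqrt_Rsqr_abs. apply sqrt_le_1_alt. unfold Rsqr. nra.
Qed.

Lemma exs_le (a b : nat -> R) : (forall n, Rabs (a n) <= b n)%R -> ex_series b -> ex_series a.
Proof. intros H Hb. apply (ex_series_le a b); auto. Qed.

Lemma exsR (c : R) a : ex_series a -> ex_series (fun n => (c * a n)%R).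
Proof. intro H. exact (ex_series_scal_l c a H). Qed.

Definition CS (g : nat -> C) : C := (Series (fun n => Re (g n)), Series (fun n => Im (g n))).
Definition cs (g : nat -> C) := ex_series (fun n => Cmod (g n)).

Lemma cs_re g : cs g -> ex_series (fun n => Re (g n)).
Proof. intro H. apply (exs_le _ _ (fun n => re_le_Cmod (g n)) H). Qed.
Lemma cs_im g : cs g -> ex_series (fun n => Im (g n)).
Proof. intro H. apply (exs_le _ _ (fun n => im_le_Cmod (g n)) H). Qed.

Lemma cs_plus g h : cs g -> cs h -> cs (fun n => g n + h n).
Proof.
  intros Hg Hh. apply (exs_le _ (fun n => Cmod (g n) + Cmod (h n))%R).
  - intro n. rewrite Rabs_pos_eq by apply Cmod_ge_0. apply Cmod_triangle.
  - apply (ex_series_plus _ _ Hg Hh).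
Qed.

Lemma cs_scal c g : cs g -> cs (fun n => c * g n).
Proof.
  intros Hg. apply (exs_le _ (fun n => Cmod c * Cmod (g n))%R).
  - intro n. rewrite Rabs_pos_eq by apply Cmod_ge_0. rewrite Cmod_mult; lra.
  - apply (ex_series_scal_l (Cmod c) _ Hg).
Qed.

Lemma cs_zero : cs (fun _ => 0).
Proof. unfold cs.
  assert (H : ex_series (fun n => (0 ^ n * 0)%R)).
  { apply ex_series_scal_r. apply ex_series_geom. rewrite Rabs_R0; lra. }
  revert H. apply ex_series_ext. intro n. rewrite Cmod_0. apply Rmult_0_r. Qed.

Lemma cs_ext g h : (forall n, g n = h n) -> cs g -> cs h.
Proof. intros E H. unfold cs. apply (ex_series_ext (fun n => Cmod (g n))); auto.
  intro; rewrite E; auto. Qed.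

Lemma CS_ext g h : (forall n, g n = h n) -> CS g = CS h.
Proof. intros E. unfold CS. f_equal; apply Series_ext; intro; rewrite E; auto. Qed.

Lemma CS_plus g h : cs g -> cs h -> CS (fun n => g n + h n) = CS g + CS h.
Proof.
  intros Hg Hh. unfold CS. apply C_eq; simpl.
  - rewrite <- Series_plus by (apply cs_re; auto). apply Series_ext; intro; reflexivity.
  - rewrite <- Series_plus by (apply cs_im; auto). apply Series_ext; intro; reflexivity.
Qed.

Lemma CS_scal c g : cs g -> CS (fun n => c * g n) = c * CS g.
Proof.
  intros Hg. unfold CS. destruct c as [c1 c2]. apply C_eq; simpl.
  - rewrite <- !Series_scal_l, <- Series_minus.
    apply Series_ext; intro; unfold Re, Im; simpl; ring.
    apply exsR; apply cs_re; auto.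
    apply exsR; apply cs_im; auto.
  - rewrite <- !Series_scal_l, <- Series_plus.
    apply Series_ext; intro; unfold Re, Im; simpl; ring.
    apply exsR; apply cs_im; auto.
    apply exsR; apply cs_re; auto.
Qed.

Definition zpos (f : Z -> C) (n : nat) := f (Z.of_nat n).
Definition zneg (f : Z -> C) (n : nat) := f (- Z.of_nat n - 1)%Z.
Definition zs (f : Z -> C) := cs (zpos f) /\ cs (zneg f).

Lemma zsum_CS f : zsum f = CS (zpos f) + CS (zneg f).
Proof. reflexivity. Qed.

Lemma zs_plus f g : zs f -> zs g -> zs (fun n => f n + g n).
Proof. intros [] []; split; apply cs_plus; auto. Qed.
Lemma zs_scal c f : zs f -> zs (fun n => c * f n).
Proof. intros []; split; apply cs_scal; auto. Qed.
Lemma zs_ext f g : (forall n, f n = g n) -> zs f -> zs g.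
Proof. intros E [H1 H2]; split; [apply (cs_ext _ _ (fun n => E _) H1) | apply (cs_ext _ _ (fun n => E _) H2)]. Qed.

Lemma zsum_ext f g : (forall n, f n = g n) -> zsum f = zsum g.
Proof. intros E. rewrite !zsum_CS. f_equal; apply CS_ext; intro; unfold zpos, zneg; auto. Qed.

Lemma zsum_plus f g : zs f -> zs g -> zsum (fun n => f n + g n) = zsum f + zsum g.
Proof. intros [] []. rewrite !zsum_CS. unfold zpos, zneg.
  rewrite (CS_plus (fun n => f (Z.of_nat n)) (fun n => g (Z.of_nat n))) by auto.
  rewrite (CS_plus (fun n => f (- Z.of_nat n - 1)%Z) (fun n => g (- Z.of_nat n - 1)%Z)) by auto.
  unfold zpos, zneg. ring. Qed.

Lemma zsum_scal c f : zs f -> zsum (fun n => c * f n) = c * zsum f.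
Proof. intros []. rewrite !zsum_CS. unfold zpos, zneg.
  rewrite (CS_scal c (fun n => f (Z.of_nat n))) by auto.
  rewrite (CS_scal c (fun n => f (- Z.of_nat n - 1)%Z)) by auto.
  unfold zpos, zneg. ring. Qed.

Lemma zs_zero : zs (fun _ => 0).
Proof. split; apply cs_zero. Qed.

Lemma zsum_zero : zsum (fun _ => 0) = 0.
Proof. rewrite <- (zsum_ext (fun n => 0 * 0)). rewrite zsum_scal. ring. apply zs_zero.
  intro; ring. Qed.

Lemma zs_csum K g : (forall m, (m < K)%nat -> zs (g m)) -> zs (fun n => csum_upto K (fun m => g m n)).
Proof.
  induction K; intros H.
  - apply (zs_ext (fun _ => 0)); [intro; reflexivity | apply zs_zero].
  - apply (zs_ext (fun n => csum_upto K (fun m => g m n) + g K n)).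
    intro; rewrite csum_S; auto. apply zs_plus; auto.
Qed.

Lemma zsum_csum K g : (forall m, (m < K)%nat -> zs (g m)) ->
  zsum (fun n => csum_upto K (fun m => g m n)) = csum_upto K (fun m => zsum (g m)).
Proof.
  induction K; intros H.
  - rewrite csum_0. rewrite <- zsum_zero. apply zsum_ext; reflexivity.
  - rewrite csum_S. rewrite <- IHK by auto.
    rewrite <- zsum_plus. apply zsum_ext; intro; rewrite csum_S; auto.
    apply zs_csum; auto. auto.
Qed.
Open Scope C_scope.

Lemma exp_le x y : (x <= y)%R -> (exp x <= exp y)%R.
Proof. intros [H|H]. left; apply exp_increasing; auto. subst; lra. Qed.

Lemma exp_m1_half : (exp (- (1)) < 1/2)%R.
Proof. rewrite exp_Ropp. pose proof (exp_ineq1 1). 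
  assert (1 + 1 < exp 1)%R by (apply H; lra).
  apply Rmult_lt_reg_l with (exp 1). lra. rewrite Rinv_r; lra. Qed.

Lemma pow_succ x k : (x ^ S k = x ^ k * x)%R.
Proof. simpl; ring. Qed.

Lemma cs_geom (g : nat -> C) (M : R) N :
  (forall n, (N <= n)%nat -> Cmod (g n) <= M * exp (- INR n))%R -> cs g.
Proof.
  intro H. unfold cs. apply (ex_series_incr_n _ N).
  apply (exs_le _ (fun k => M * exp (- INR (N + k)))%R).
  - intro k. rewrite Rabs_pos_eq by apply Cmod_ge_0. apply H; lia.
  - apply (ex_series_incr_n (fun k => M * exp (- INR k))%R N).
    apply (ex_series_ext (fun k => M * (exp (- (1))) ^ k)%R).
    + intro k. f_equal. symmetry. induction k. simpl; rewrite Ropp_0, exp_0; auto.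
      rewrite S_INR, pow_succ, <- IHk, <- exp_plus. f_equal; ring.
    + apply exsR. apply ex_series_geom. rewrite Rabs_pos_eq. 
      pose proof exp_m1_half; lra. left; apply exp_pos.
Qed.

Lemma Cmod_signZ k : Cmod (signZ k) = 1%R.
Proof. unfold signZ; destruct (Z.even k); rewrite Cmod_R, ?Rabs_R1, ?Rabs_m1; auto.
  Qed.

Lemma Re_tpi1 w : Re (two_pi_i * w) = (- (2 * PI) * Im w)%R.
Proof. destruct w; unfold two_pi_i, Ci; simpl; ring. Qed.

Lemma den_bound (w : C) : (Cmod w <= 1/2 \/ 2 <= Cmod w)%R -> (1/2 <= Cmod (1 - w))%R.
Proof.
  intros H. pose proof (Cmod_triangle (1 - w) w).
  pose proof (Cmod_triangle (- (1 - w)) 1).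
  replace (1 - w + w) with (RtoC 1) in H0 by ring.
  replace (- (1 - w) + 1) with w in H1 by ring.
  rewrite Cmod_opp, Cmod_1 in *. lra.
Qed.

Definition den u tau (n : Z) := cexp (two_pi_i * u) * cexp (two_pi_i * tau * RtoC (IZR n)).

Lemma Cmod_den u tau n : Cmod (den u tau n) = exp (- (2 * PI) * (Im u + Im tau * IZR n)).
Proof. unfold den. rewrite Cmod_mult, !Cmod_cexp, Re_tpi1, Re_tpi, <- exp_plus. f_equal; ring. Qed.

Lemma term_bound K u v tau n :
  (1/2 <= Cmod (1 - den u tau n))%R ->
  (Cmod (AL_term K u v tau n) <=
    2 * exp (- (2 * PI) * (Im tau * (INR K * IZR n * (IZR n + 1) / 2) + Im v * IZR n)))%R.
Proof.
  intros H. unfold AL_term. fold (den u tau n).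
  assert (Hd : 1 - den u tau n <> 0).
  { intro E; rewrite E, Cmod_0 in H; lra. }
  unfold Cdiv. rewrite !Cmod_mult, Cmod_inv by auto.
  rewrite Cmod_signZ, !Cmod_cexp, Re_tpi, Re_tpi.
  rewrite !mult_IZR, <- INR_IZR_INZ, plus_IZR.
  replace (- (2 * PI) * (Im tau * (INR K * IZR n * (IZR n + 1) / 2) + Im v * IZR n))%R
    with (- (2 * PI) * Im tau * (INR K * IZR n * (IZR n + 1) / 2) + (- (2 * PI) * Im v * IZR n))%R by ring.
  rewrite exp_plus.
  assert (0 < exp (- (2 * PI) * Im tau * (INR K * IZR n * (IZR n + 1) / 2)) *
              exp (- (2 * PI) * Im v * IZR n))%R by (apply Rmult_lt_0_compat; apply exp_pos).
  assert (0 < Cmod (1 - den u tau n))%R by lra.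
  assert (/ Cmod (1 - den u tau n) <= 2)%R.
  { apply Rmult_le_reg_l with (Cmod (1 - den u tau n)); auto. rewrite Rinv_r by lra. lra. }
  rewrite Rmult_1_l. 
  apply Rle_trans with (exp (- (2 * PI) * Im tau * (INR K * IZR n * (IZR n + 1) / 2)) *
              exp (- (2 * PI) * Im v * IZR n) * 2)%R.
  apply Rmult_le_compat_l; lra. lra.
Qed.

Lemma exp1_gt2 : (2 < exp 1)%R.
Proof. pose proof (exp_ineq1 1). assert (1 + 1 < exp 1)%R by (apply H; lra). lra. Qed.

Lemma AL_zs K u v tau : (1 <= K)%nat -> (0 < Im tau)%R -> zs (AL_term K u v tau).
Proof.
  intros HK Ha.
  set (a := Im tau). set (b := Im v). set (c := Im u).
  assert (HK' : (1 <= INR K)%R) by (apply (le_INR 1); auto).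
  pose proof PI_RGT_0 as Hpi.
  set (B := ((2 + 2 * PI * (Rabs b + Rabs c)) / (PI * a))%R).
  destruct (INR_unbounded B) as [N HN].
  assert (Hb := Rabs_pos b). assert (Hc := Rabs_pos c).
  assert (Hb1 := Rle_abs b). assert (Hb2 := Rle_abs (-b)). rewrite Rabs_Ropp in Hb2.
  assert (Hc1 := Rle_abs c). assert (Hc2 := Rle_abs (-c)). rewrite Rabs_Ropp in Hc2.
  assert (Ha' : (0 < a)%R) by exact Ha.
  assert (Hx : forall n, (N <= n)%nat -> (PI * a * INR n >= 2 + 2 * PI * (Rabs b + Rabs c))%R).
  { intros n Hn. apply le_INR in Hn.
    assert (INR n >= B)%R by lra.
    assert (PI * a * INR n >= PI * a * B)%R.
    { apply Rle_ge, Rmult_le_compat_l. apply Rlt_le, Rmult_lt_0_compat; lra. lra. }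
    replace (PI * a * B)%R with (2 + 2 * PI * (Rabs b + Rabs c))%R in H0; [lra|]. unfold B; field. split; lra. }
  split.
  - apply (cs_geom _ 2 N). intros n Hn. specialize (Hx n Hn).
    assert (Hn0 := pos_INR n).
    unfold zpos. eapply Rle_trans. apply term_bound.
    + apply den_bound. left. rewrite Cmod_den. rewrite <- INR_IZR_INZ.
      apply Rle_trans with (exp (- (1))). apply exp_le. fold c a. nra.
      pose proof exp_m1_half; lra.
    + rewrite <- INR_IZR_INZ. apply Rmult_le_compat_l. lra. apply exp_le. fold a b.
      assert (h1 : (0 <= (INR K - 1) * (PI * a * INR n * (INR n + 1)))%R).
      { apply Rmult_le_pos. lra. apply Rmult_le_pos; [|lra]. apply Rmult_le_pos; [|lra]. nra. }
      assert (h2 : (0 <= (PI * a * INR n - (2 + 2 * PI * (Rabs b + Rabs c))) * (INR n + 1))%R).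
      { apply Rmult_le_pos; lra. }
      assert (h3 : (0 <= PI * INR n * (b + Rabs b))%R).
      { apply Rmult_le_pos; [|lra]. apply Rmult_le_pos; lra. }
      assert (h4 : (0 <= PI * Rabs b)%R) by (apply Rmult_le_pos; lra).
      assert (h5 : (0 <= PI * Rabs c)%R) by (apply Rmult_le_pos; lra).
      assert (h6 : (0 <= PI * Rabs c * INR n)%R) by (apply Rmult_le_pos; lra).
      assert (h7 : (0 <= PI * Rabs b * INR n)%R) by (apply Rmult_le_pos; lra).
      nra.
  - apply (cs_geom _ 2 N). intros n Hn. specialize (Hx n Hn).
    assert (Hn0 := pos_INR n).
    unfold zneg. eapply Rle_trans. apply term_bound.
    + apply den_bound. right. rewrite Cmod_den. rewrite minus_IZR, opp_IZR, <- INR_IZR_INZ.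
      apply Rle_trans with (exp 1). pose proof exp1_gt2; lra. apply exp_le. fold c a. nra.
    + rewrite minus_IZR, opp_IZR, <- INR_IZR_INZ. apply Rmult_le_compat_l. lra. apply exp_le. fold a b.
      assert (h1 : (0 <= (INR K - 1) * (PI * a * INR n * (INR n + 1)))%R).
      { apply Rmult_le_pos. lra. apply Rmult_le_pos; [|lra]. apply Rmult_le_pos; [|lra]. nra. }
      assert (h2 : (0 <= (PI * a * INR n - (2 + 2 * PI * (Rabs b + Rabs c))) * (INR n + 1))%R).
      { apply Rmult_le_pos; lra. }
      assert (h3 : (0 <= PI * (INR n + 1) * (Rabs b - b))%R).
      { apply Rmult_le_pos; [|lra]. apply Rmult_le_pos; lra. }
      assert (h4 : (0 <= PI * Rabs b)%R) by (apply Rmult_le_pos; lra).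
      assert (h5 : (0 <= PI * Rabs c)%R) by (apply Rmult_le_pos; lra).
      assert (h6 : (0 <= PI * Rabs c * INR n)%R) by (apply Rmult_le_pos; lra).
      assert (h7 : (0 <= PI * Rabs b * INR n)%R) by (apply Rmult_le_pos; lra).
      nra.
Qed.
Open Scope C_scope.

Open Scope C_scope.
Lemma sumS (a : nat -> R) n : sum_n a (S n) = (sum_n a n + a (S n))%R.
Proof. rewrite sum_Sn. reflexivity. Qed.

Section Reindex.
Variables (a : nat -> R) (K c : nat).
Hypothesis HK : (0 < K)%nat.
Hypothesis Hc : (c < K)%nat.
Hypothesis Hz : forall j i, (i < K)%nat -> i <> c -> a (K * j + i)%nat = 0%R.

Lemma az n : (forall j, n <> (K * j + c)%nat) -> a n = 0%R.
Proof.
  intros H. pose proof (Nat.div_mod_eq n K) as E0.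
  pose proof (Nat.mod_upper_bound n K ltac:(lia)) as E1.
  assert (n mod K <> c) as E2.
  { intro E. apply (H (n / K)%nat). rewrite <- E. exact E0. }
  rewrite E0. apply Hz; auto.
Qed.

Lemma sum_pre i : (i < c)%nat -> sum_n a i = 0%R.
Proof.
  induction i; intros H.
  - rewrite sum_O. apply az. intros j E. lia.
  - rewrite sumS, IHi by lia. rewrite az. lra. intros j E.
    destruct j; [lia|]. nia.
Qed.

Lemma sum_reidx j : sum_n a (K * j + c) = sum_n (fun j => a (K * j + c)%nat) j.
Proof.
  induction j.
  - rewrite sum_O. rewrite Nat.mul_0_r, Nat.add_0_l. destruct (Nat.eq_dec c 0) as [E|E].
    + rewrite E, sum_O; auto.
    + replace c with (S (c - 1)) by lia. rewrite sumS, sum_pre by lia. lra.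
  - assert (Ht : forall t, (t < K)%nat -> sum_n a (K * j + c + t) = sum_n (fun j => a (K * j + c)%nat) j).
    { induction t; intros Ht.
      - rewrite Nat.add_0_r; auto.
      - replace (K * j + c + S t)%nat with (S (K * j + c + t)) by lia.
        rewrite sumS, IHt by lia. rewrite az. lra.
        intros j' E. destruct (Nat.le_gt_cases j' j) as [L|L].
        + pose proof (Nat.mul_le_mono_l _ _ K L). lia.
        + assert (L' : (S j <= j')%nat) by lia. pose proof (Nat.mul_le_mono_l _ _ K L').
          rewrite Nat.mul_succ_r in H. lia. }
    rewrite (sumS (fun j => a (K * j + c)%nat) j).
    replace (K * S j + c)%nat with (S (K * j + c + (K - 1)))%nat by (rewrite Nat.mul_succ_r; lia).
    rewrite sumS, Ht by lia. f_equal.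
Qed.

Lemma Series_reidx : ex_series a -> Series (fun j => a (K * j + c)%nat) = Series a.
Proof.
  intros Ha. unfold Series.
  rewrite <- (Lim_seq_subseq (sum_n a) (fun j => K * j + c)%nat).
  - f_equal. apply Lim_seq_ext. intro j. symmetry. apply sum_reidx.
  - apply eventually_subseq. intro n. rewrite Nat.mul_succ_r. lia.
  - destruct Ha as [l Hl]. exists l. exact Hl.
Qed.
End Reindex.

Lemma Z_nodiv (K j m i : Z) : (0 < i < K)%Z -> (K * j + i <> K * m)%Z.
Proof.
  intros H E. assert (E' : (K * (m - j) = i)%Z) by lia.
  destruct (Z.le_gt_cases (m - j) 0) as [L|L].
  - assert (K * (m - j) <= 0)%Z by nia. lia.
  - assert (K * (m - j) >= K)%Z by nia. lia.
Qed.


Lemma zsum_reidx (G : Z -> C) K : (0 < K)%nat -> zs G ->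
  (forall n, (forall j, n <> (Z.of_nat K * j)%Z) -> G n = 0) ->
  zsum (fun j => G (Z.of_nat K * j)%Z) = zsum G.
Proof.
  intros HK [Hp Hn] H0.
  assert (Zp : forall j i, (i < K)%nat -> i <> 0%nat -> G (Z.of_nat (K * j + i)) = 0).
  { intros j i Hi Hi0. apply H0. intros m E. apply (Z_nodiv (Z.of_nat K) (Z.of_nat j) m (Z.of_nat i)).
    lia. rewrite <- E. lia. }
  assert (Zn : forall j i, (i < K)%nat -> i <> (K - 1)%nat -> G (- Z.of_nat (K * j + i) - 1)%Z = 0).
  { intros j i Hi Hi0. apply H0. intros m E.
    apply (Z_nodiv (Z.of_nat K) (- Z.of_nat j - 1) m (Z.of_nat K - 1 - Z.of_nat i)).
    lia. rewrite <- E. lia. }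
  unfold zsum. f_equal; f_equal.
  - rewrite <- (Series_reidx (fun n => Re (G (Z.of_nat n))) K 0); auto.
    apply Series_ext; intro j. f_equal. f_equal. lia.
    intros j i Hi Hi0. rewrite Zp; auto. apply cs_re; auto.
  - rewrite <- (Series_reidx (fun n => Re (G (- Z.of_nat n - 1)%Z)) K (K - 1)); try lia.
    apply Series_ext; intro j. f_equal. f_equal. lia.
    intros j i Hi Hi0. rewrite Zn; auto. apply cs_re; auto.
  - rewrite <- (Series_reidx (fun n => Im (G (Z.of_nat n))) K 0); auto.
    apply Series_ext; intro j. f_equal. f_equal. lia.
    intros j i Hi Hi0. rewrite Zp; auto. apply cs_im; auto.
  - rewrite <- (Series_reidx (fun n => Im (G (- Z.of_nat n - 1)%Z)) K (K - 1)); try lia.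
    apply Series_ext; intro j. f_equal. f_equal. lia.
    intros j i Hi Hi0. rewrite Zn; auto. apply cs_im; auto.
Qed.
Open Scope C_scope.

Ltac argeq := unfold two_pi_i, Ci; rewrite ?mult_IZR, ?plus_IZR, ?minus_IZR, ?opp_IZR, <- ?INR_IZR_INZ;
  apply C_eq; simpl; field.

Lemma INRK_neq K : (0 < K)%nat -> INR K <> 0%R.
Proof. intro. apply not_0_INR. lia. Qed.

Lemma cpow_1 m : cpow 1 m = 1.
Proof. induction m; simpl; auto. rewrite IHm; ring. Qed.

Lemma F1 K u tau n :
  cexp (two_pi_i * (RtoC (INR K) * u)) * cexp (two_pi_i * (RtoC (INR K) * tau) * RtoC (IZR n))
  = cpow (den u tau n) K.
Proof.
  unfold den. rewrite <- !cexp_add, <- cexp_nat. f_equal. ring.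
Qed.

Lemma F2 K u v tau n m :
  cexp (two_pi_i * RtoC (INR m) * u) *
  cexp (two_pi_i * (v + RtoC (INR m) * tau + RtoC ((INR K - 1) / 2)%R) * RtoC (IZR n))
  = cexp (two_pi_i * v * RtoC (IZR n)) * signZ ((Z.of_nat K - 1) * n) * cpow (den u tau n) m.
Proof.
  rewrite <- signZ_pi. unfold den. rewrite <- (cexp_add (two_pi_i * u)), <- cexp_nat, <- !cexp_add.
  f_equal. rewrite mult_IZR, minus_IZR, <- INR_IZR_INZ.
  destruct u, v, tau. unfold two_pi_i, Ci. apply C_eq; simpl; field.
Qed.

Lemma F4 K tau n :
  cexp (two_pi_i * (RtoC (INR K) * tau) * RtoC (IZR (Z.of_nat 1 * n * (n + 1)) / 2)%R)
  = cexp (two_pi_i * tau * RtoC (IZR (Z.of_nat K * n * (n + 1)) / 2)%R).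
Proof.
  f_equal. rewrite !mult_IZR, plus_IZR, <- !INR_IZR_INZ. destruct tau. unfold two_pi_i, Ci.
  apply C_eq; simpl; field.
Qed.

Lemma P1 K u v tau n : (0 < K)%nat ->
  RtoC 1 - den u tau n <> RtoC 0 ->
  RtoC 1 - cpow (den u tau n) K <> RtoC 0 ->
  AL_term K u v tau n =
  csum_upto K (fun m => cexp (two_pi_i * RtoC (INR m) * u) *
     AL_term 1 (RtoC (INR K) * u) (v + RtoC (INR m) * tau + RtoC ((INR K - 1) / 2)%R)
        (RtoC (INR K) * tau) n).
Proof.
  intros HK Hd1 HdK.
  set (w := den u tau n).
  set (Q := cexp (two_pi_i * tau * RtoC (IZR (Z.of_nat K * n * (n + 1)) / 2)%R)).
  set (Y := cexp (two_pi_i * v * RtoC (IZR n))).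
  rewrite (csum_ext K _ (fun m => (signZ (Z.of_nat K * n) * Q * Y / (1 - cpow w K)) * cpow w m)).
  2:{ intros m _. unfold AL_term. rewrite F1, F4. fold w Q.
      transitivity ((cexp (two_pi_i * RtoC (INR m) * u) *
        cexp (two_pi_i * (v + RtoC (INR m) * tau + RtoC ((INR K - 1) / 2)%R) * RtoC (IZR n)))
        * signZ (Z.of_nat 1 * n) * Q / (RtoC 1 - cpow w K)).
      field; auto.
      rewrite F2. fold w Y.
      replace (signZ (Z.of_nat K * n)) with (signZ (Z.of_nat 1 * n) * signZ ((Z.of_nat K - 1) * n)).
      field; auto.
      rewrite <- signZ_add. f_equal. lia. }
  rewrite <- csum_scal.
  assert (Hs : csum_upto K (cpow w) = (1 - cpow w K) / (1 - w)).
  { rewrite <- geom. field. auto. }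
  rewrite Hs. unfold AL_term. fold w Q Y. change (cexp (two_pi_i * u) * cexp (two_pi_i * tau * RtoC (IZR n))) with w. field. auto.
Qed.

Lemma cexp_tpi_real x : cexp (two_pi_i * RtoC x) = (cos (2 * PI * x), sin (2 * PI * x)).
Proof. unfold cexp, two_pi_i, Ci. apply C_eq; simpl;
  replace ((2 * PI * 0 - 0 * 1) * x - (2 * PI * 1 + 0 * 0) * 0)%R with 0%R by ring;
  replace ((2 * PI * 0 - 0 * 1) * 0 + (2 * PI * 1 + 0 * 0) * x)%R with (2 * PI * x)%R by ring;
  rewrite exp_0; ring. Qed.

Lemma cexp_pik_real x : cexp (RtoC PI * Ci * RtoC x) = (cos (PI * x), sin (PI * x)).
Proof. unfold cexp, Ci. apply C_eq; simpl;
  replace ((PI * 0 - 0 * 1) * x - (PI * 1 + 0 * 0) * 0)%R with 0%R by ring;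
  replace ((PI * 0 - 0 * 1) * 0 + (PI * 1 + 0 * 0) * x)%R with (PI * x)%R by ring;
  rewrite exp_0; ring. Qed.

Definition rho K (n : Z) := cexp (two_pi_i * RtoC (IZR n / INR K)%R).

Lemma rho_K K n : (0 < K)%nat -> cpow (rho K n) K = 1.
Proof. intro HK. unfold rho. rewrite <- cexp_nat.
  replace (RtoC (INR K) * (two_pi_i * RtoC (IZR n / INR K)%R)) with (two_pi_i * RtoC (IZR n)).
  apply cexp_int. pose proof (INRK_neq K HK). unfold two_pi_i, Ci. apply C_eq; simpl; field; auto. Qed.

Lemma rho_mul K j : (0 < K)%nat -> rho K (Z.of_nat K * j) = 1.
Proof. intro HK. unfold rho. rewrite mult_IZR, <- INR_IZR_INZ.
  replace (INR K * IZR j / INR K)%R with (IZR j). apply cexp_int.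
  field. apply INRK_neq; auto. Qed.

Lemma rho_neq1 K n : (0 < K)%nat -> (forall j, n <> (Z.of_nat K * j)%Z) -> rho K n <> 1.
Proof.
  intros HK Hn E. pose proof (INRK_neq K HK) as HK'.
  unfold rho in E. rewrite cexp_tpi_real in E.
  injection E as Ec Es.
  destruct (sin_eq_0_0 _ Es) as [k Hk].
  assert (Hs : signZ k = 1).
  { rewrite <- signZ_pi, cexp_pik_real. replace (PI * IZR k)%R with (2 * PI * (IZR n / INR K))%R by lra.
    rewrite Ec, Es. reflexivity. }
  unfold signZ in Hs. destruct (Z.even k) eqn:Ek.
  - apply Z.even_spec in Ek. destruct Ek as [j ->].
    apply (Hn j). apply eq_IZR. rewrite mult_IZR, <- INR_IZR_INZ.
    rewrite mult_IZR in Hk. pose proof PI_RGT_0.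
    apply Rmult_eq_reg_l with (2 * PI / INR K)%R.
    transitivity (2 * PI * (IZR n / INR K))%R. field; auto. rewrite Hk. field; auto.
    apply Rmult_integral_contrapositive; split; [lra|]. apply Rinv_neq_0_compat; auto.
  - exfalso. injection Hs as Hs. lra.
Qed.

Lemma csum_rho_0 K n : (0 < K)%nat -> (forall j, n <> (Z.of_nat K * j)%Z) ->
  csum_upto K (cpow (rho K n)) = 0.
Proof.
  intros HK Hn. pose proof (geom K (rho K n)) as G. rewrite rho_K in G by auto.
  assert (1 - rho K n <> 0).
  { intro E. apply (rho_neq1 K n HK Hn). rewrite <- (Cplus_0_l (rho K n)), <- E. ring. }
  replace (RtoC 1 - 1) with (RtoC 0) in G by ring.
  transitivity (/ (1 - rho K n) * ((1 - rho K n) * csum_upto K (cpow (rho K n)))).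
  field; auto. rewrite G. ring.
Qed.

Ltac argeqC K HK := repeat (rewrite mult_IZR || rewrite plus_IZR || rewrite minus_IZR || rewrite opp_IZR); rewrite <- ?INR_IZR_INZ;
  let H := fresh in pose proof (INRK_neq K HK) as H;
  unfold two_pi_i, Ci, Cdiv, Cinv; apply C_eq; simpl; field; auto.

Lemma Sm_eq K u v tau m n : (0 < K)%nat ->
  AL_term 1 u (v / RtoC (INR K) + RtoC (INR m / INR K)%R + tau * RtoC ((INR K - 1) / (2 * INR K))%R)
    (tau / RtoC (INR K)) n =
  AL_term 1 u (v / RtoC (INR K) + tau * RtoC ((INR K - 1) / (2 * INR K))%R)
    (tau / RtoC (INR K)) n * cpow (rho K n) m.
Proof.
  intro HK. unfold AL_term, rho. rewrite <- cexp_nat.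
  set (A := v / RtoC (INR K) + tau * RtoC ((INR K - 1) / (2 * INR K))%R).
  replace (two_pi_i * (v / RtoC (INR K) + RtoC (INR m / INR K)%R + tau * RtoC ((INR K - 1) / (2 * INR K))%R) * RtoC (IZR n))
    with (two_pi_i * A * RtoC (IZR n) + RtoC (INR m) * (two_pi_i * RtoC (IZR n / INR K)%R)).
  - rewrite cexp_add. unfold Cdiv. ring.
  - unfold A. destruct v, tau. argeqC K HK.
Qed.

Lemma B_mul K u v tau j : (0 < K)%nat ->
  AL_term 1 u (v / RtoC (INR K) + tau * RtoC ((INR K - 1) / (2 * INR K))%R)
    (tau / RtoC (INR K)) (Z.of_nat K * j) = AL_term K u v tau j.
Proof.
  intro HK. unfold AL_term.
  replace (signZ (Z.of_nat 1 * (Z.of_nat K * j))) with (signZ (Z.of_nat K * j)) by (f_equal; lia).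
  assert (E1 : cexp (two_pi_i * (tau / RtoC (INR K)) * RtoC (IZR (Z.of_nat K * j)))
             = cexp (two_pi_i * tau * RtoC (IZR j))).
  { f_equal. destruct tau. argeqC K HK. }
  assert (E2 : cexp (two_pi_i * (tau / RtoC (INR K)) *
                 RtoC (IZR (Z.of_nat 1 * (Z.of_nat K * j) * (Z.of_nat K * j + 1)) / 2)%R) *
               cexp (two_pi_i * (v / RtoC (INR K) + tau * RtoC ((INR K - 1) / (2 * INR K))%R) *
                 RtoC (IZR (Z.of_nat K * j)))
             = cexp (two_pi_i * tau * RtoC (IZR (Z.of_nat K * j * (j + 1)) / 2)%R) *
               cexp (two_pi_i * v * RtoC (IZR j))).
  { rewrite <- !cexp_add. f_equal. destruct tau, v. argeqC K HK. }
  transitivity (signZ (Z.of_nat K * j) *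
     (cexp (two_pi_i * (tau / RtoC (INR K)) *
                 RtoC (IZR (Z.of_nat 1 * (Z.of_nat K * j) * (Z.of_nat K * j + 1)) / 2)%R) *
               cexp (two_pi_i * (v / RtoC (INR K) + tau * RtoC ((INR K - 1) / (2 * INR K))%R) *
                 RtoC (IZR (Z.of_nat K * j)))) /
     (RtoC 1 - cexp (two_pi_i * u) * cexp (two_pi_i * (tau / RtoC (INR K)) * RtoC (IZR (Z.of_nat K * j))))).
  unfold Cdiv; ring.
  rewrite E1, E2. unfold Cdiv; ring.
Qed.
Open Scope C_scope.

Lemma Im_Kt K tau : Im (RtoC (INR K) * tau) = (INR K * Im tau)%R.
Proof. destruct tau; simpl; ring. Qed.

Lemma Im_tK K tau : (0 < K)%nat -> Im (tau / RtoC (INR K)) = (Im tau / INR K)%R.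
Proof. intros HK. pose proof (INRK_neq K HK). destruct tau; unfold Cdiv, Cinv; simpl; field; auto. Qed.

Lemma RtoC_K_neq K : (0 < K)%nat -> RtoC (INR K) <> 0.
Proof. intros HK E. injection E as E. apply (INRK_neq K HK); auto. Qed.

Theorem mainTheorem1 (K : nat) (HK : (0 < K)%nat) (tau u v : C)
  (Htau : (0 < Im tau)%R) :
  (AL_defined u tau ->
   AL_defined (RtoC (INR K) * u) (RtoC (INR K) * tau) ->
   AL K u v tau =
   csum_upto K (fun m =>
     cexp (two_pi_i * RtoC (INR m) * u) *
     AL 1 (RtoC (INR K) * u)
          (v + RtoC (INR m) * tau + RtoC ((INR K - 1) / 2)%R)
          (RtoC (INR K) * tau)))
  /\
  (AL_defined u tau ->
   AL_defined u (tau / RtoC (INR K)) ->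
   AL K u v tau =
   / RtoC (INR K) * cexp (RtoC PI * Ci * RtoC (INR K - 1)%R * u) *
   csum_upto K (fun m =>
     AL 1 u
          (v / RtoC (INR K) + RtoC (INR m / INR K)%R
             + tau * RtoC ((INR K - 1) / (2 * INR K))%R)
          (tau / RtoC (INR K)))).
Proof.
  pose proof (INRK_neq K HK) as HK'. pose proof (RtoC_K_neq K HK) as HKc.
  assert (HK1 : (1 <= INR K)%R) by (apply (le_INR 1); lia).
  set (E := cexp (RtoC PI * Defs.Ci * RtoC (INR K) * u)).
  split.
  - intros H1 H2.
    assert (HtK : (0 < Im (RtoC (INR K) * tau))%R) by (rewrite Im_Kt; nra).
    rewrite (csum_ext K _ (fun m => E * zsum (fun n => cexp (two_pi_i * RtoC (INR m) * u) *
        AL_term 1 (RtoC (INR K) * u) (v + RtoC (INR m) * tau + RtoC ((INR K - 1) / 2)%R)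
          (RtoC (INR K) * tau) n))).
    2:{ intros m _. unfold AL. rewrite zsum_scal by (apply AL_zs; auto).
        replace (cexp (RtoC PI * Defs.Ci * RtoC (INR 1) * (RtoC (INR K) * u))) with E. ring.
        unfold E. f_equal. simpl INR. destruct u; unfold Ci, Defs.Ci; apply C_eq; simpl; ring. }
    rewrite <- csum_scal, <- zsum_csum.
    2:{ intros m _. apply zs_scal. apply AL_zs; auto. }
    unfold AL. fold E. f_equal. apply zsum_ext. intro n. apply P1.
    auto. apply H1. rewrite <- F1. apply H2.
  - intros H1 H3.
    assert (HtK : (0 < Im (tau / RtoC (INR K)))%R).
    { rewrite Im_tK by auto. apply Rdiv_lt_0_compat; lra. }
    set (B := fun n => AL_term 1 u (v / RtoC (INR K) + tau * RtoC ((INR K - 1) / (2 * INR K))%R)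
        (tau / RtoC (INR K)) n).
    set (S := fun m n => AL_term 1 u
          (v / RtoC (INR K) + RtoC (INR m / INR K)%R + tau * RtoC ((INR K - 1) / (2 * INR K))%R)
          (tau / RtoC (INR K)) n).
    assert (HS : forall m, (m < K)%nat -> zs (S m)) by (intros; apply AL_zs; auto).
    unfold AL at 2.
    rewrite (csum_ext K _ (fun m => cexp (RtoC PI * Defs.Ci * RtoC (INR 1) * u) * zsum (S m)))
      by (intros; reflexivity).
    rewrite <- csum_scal, <- zsum_csum by auto.
    assert (HG : forall n, csum_upto K (fun m => S m n) = B n * csum_upto K (cpow (rho K n))).
    { intro n. rewrite csum_scal. apply csum_ext. intros m _. unfold S, B. apply Sm_eq; auto. }
    rewrite (zsum_ext _ (fun n => B n * csum_upto K (cpow (rho K n)))) by auto.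
    rewrite <- (zsum_reidx _ K); auto.
    2:{ apply (zs_ext (fun n => csum_upto K (fun m => S m n))); auto. apply zs_csum; auto. }
    2:{ intros n Hn. rewrite csum_rho_0; auto. ring. }
    rewrite (zsum_ext _ (fun j => RtoC (INR K) * AL_term K u v tau j)).
    2:{ intro j. rewrite rho_mul by auto. rewrite (csum_ext K _ (fun _ => 1)) by (intros; apply cpow_1).
        rewrite csum_const. unfold B. rewrite B_mul by auto. ring. }
    rewrite zsum_scal by (apply AL_zs; auto; lia).
    unfold AL. fold E.
    replace E with (cexp (RtoC PI * Ci * RtoC (INR K - 1)%R * u) * cexp (RtoC PI * Defs.Ci * RtoC (INR 1) * u)).
    field; auto.
    rewrite <- cexp_add. unfold E. f_equal. simpl INR. destruct u; unfold Ci, Defs.Ci; apply C_eq; simpl; ring.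
Qed.
Open Scope C_scope.
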